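(* Let $R$ be a ring and $\mathcal{X}$ a class of left $R$-modules. Suppose every left $R$-module $M$ has a surjective $\mathcal{X}$-projective precover $\phi: P \to M$ (i.e. $P$ is an $\mathcal{X}$-projective module and $\phi$ is a precover with respect to the class of $\mathcal{X}$-projective modules) with $\ker\phi \in \mathcal{X}$. Then every bounded complex of left $R$-modules has a $C(\mathcal{X}\text{-projective})$-precover.
   Context: A left $R$-module $P$ is $\mathcal{X}$-projective if $\mathrm{Ext}^1_R(P, N) = 0$ for all $N \in \mathcal{X}$. $C(\mathcal{X}\text{-projective})$ denotes the class of complexes all of whose terms are $\mathcal{X}$-projective modules. For a class $\mathcal{F}$ of objects in an abelian category, a morphism $\phi: F \to M$ with $F \in \mathcal{F}$ is an $\mathcal{F}$-precover of $M$ if every morphism $f: F' \to M$ with $F' \in \mathcal{F}$ factors as $f = \phi g$ for some $g: F' \to F$. A complex is bounded if only finitely many of its terms are nonzero. *)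

(* Defs.v *)
From HB Require Import structures.
From mathcomp Require Import all_boot all_order all_algebra.
Set Implicit Arguments. Unset Strict Implicit. Unset Printing Implicit Defensive.
Import GRing.Theory.
Local Open Scope ring_scope.

Section Defs.
Variable R : nzRingType.

(* Ext^1_R(P, N) = 0, in Yoneda form: every extension 0 -> N -> E -> P -> 0
   of left R-modules splits (is equivalent to the zero/split extension). *)
Definition Ext1_vanishes (P N : lmodType R) : Prop :=
  forall (E : lmodType R) (i : {linear N -> E}) (p : {linear E -> P}),
    injective i ->
    (forall y : P, exists e : E, p e = y) ->
    (forall e : E, p e = 0 <-> exists n : N, i n = e) ->
    exists s : {linear P -> E}, forall x : P, p (s x) = x.

Definition Xprojective (X : lmodType R -> Prop) (P : lmodType R) : Prop :=
  forall N : lmodType R, X N -> Ext1_vanishes P N.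

Definition mod_precover (F : lmodType R -> Prop) (P M : lmodType R)
    (phi : {linear P -> M}) : Prop :=
  F P /\ forall (P' : lmodType R) (f : {linear P' -> M}), F P' ->
    exists g : {linear P' -> P}, forall x, f x = phi (g x).

Definition ker_in (X : lmodType R -> Prop) (P M : lmodType R)
    (phi : {linear P -> M}) : Prop :=
  exists (K : lmodType R) (iota : {linear K -> P}),
    X K /\ injective iota /\
    forall x : P, phi x = 0 <-> exists k : K, iota k = x.

Record complex := Complex {
  cobj : int -> lmodType R;
  cdiff : forall n : int, {linear cobj n -> cobj (n + 1)};
  cdiff_sq : forall (n : int) (x : cobj n), cdiff (n + 1) (cdiff n x) = 0
}.

Record cmorph (C D : complex) := CMorph {
  cmap : forall n : int, {linear cobj C n -> cobj D n};
  cmap_comm : forall (n : int) (x : cobj C n),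
      cmap (n + 1) (cdiff C n x) = cdiff D n (cmap n x)
}.

Definition bounded (C : complex) : Prop :=
  exists N : nat, forall n : int, (N%:Z < `|n|)%R -> forall x : cobj C n, x = 0.

Definition cx_precover (F : complex -> Prop) (D C : complex)
    (phi : cmorph D C) : Prop :=
  F D /\ forall (D' : complex) (f : cmorph D' C), F D' ->
    exists g : cmorph D' D, forall n (x : cobj D' n),
      cmap f n x = cmap phi n (cmap g n x).

Definition C_Xproj (X : lmodType R -> Prop) (C : complex) : Prop :=
  forall n : int, Xprojective X (cobj C n).

End Defs.

(* Main.v *)
From HB Require Import structures.
Require Import Defs.
From mathcomp Require Import all_boot all_order all_algebra.
From mathcomp Require Import zify.
From Stdlib Require Import ClassicalEpsilon.
Set Implicit Arguments. Unset Strict Implicit. Unset Printing Implicit Defensive.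
Import GRing.Theory Num.Theory.
Local Open Scope ring_scope.

Section Ker.
Variables (R : nzRingType) (V W : lmodType R) (h : {linear V -> W}).
Definition kerp : {pred V} := fun x => h x == 0.
Lemma kerp_closed : submod_closed kerp.
Proof.
split; first by rewrite unfold_in /kerp /= raddf0.
by move=> a u v; rewrite !unfold_in /kerp /= linearP => /eqP -> /eqP ->; rewrite scaler0 addr0.
Qed.
HB.instance Definition _ := GRing.isSubmodClosed.Build R V kerp kerp_closed.
Record kerT := KerT { kval : V; _ : kval \in kerp }.
HB.instance Definition _ := [isSub for kval].
HB.instance Definition _ := [Choice of kerT by <:].
HB.instance Definition _ := [SubChoice_isSubLmodule of kerT by <:].
Lemma kval_is_linear : linear kval. Proof. by []. Qed.
HB.instance Definition _ := GRing.isLinear.Build R kerT V _ kval kval_is_linear.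
Lemma kvalP (x : kerT) : h (kval x) = 0.
Proof. by case: x => v /= /eqP. Qed.

Variables (U : lmodType R) (f : {linear U -> V}) (Hf : forall x, h (f x) = 0).
Definition restr_fun (x : U) : kerT := @KerT (f x) (introT eqP (Hf x)).
Lemma restr_is_linear : linear restr_fun.
Proof. by move=> a x y; apply: val_inj; rewrite /= linearP. Qed.
HB.instance Definition _ := GRing.isLinear.Build R U kerT _ restr_fun restr_is_linear.
Lemma restrE x : kval (restr_fun x) = f x. Proof. by []. Qed.
End Ker.

Section Pair.
Variables (R : nzRingType) (U V W : lmodType R) (f : {linear U -> V}) (g : {linear U -> W}).
Definition pairL (x : U) : (V * W)%type := (f x, g x).
Lemma pairL_is_linear : linear pairL.
Proof. by move=> a x y; rewrite /pairL !linearP. Qed.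
HB.instance Definition _ := GRing.isLinear.Build R U (V * W)%type _ pairL pairL_is_linear.
End Pair.

Section Cast.
Variables (R : nzRingType) (I : eqType) (F : I -> lmodType R).
Definition castF (i j : I) (e : i = j) : {linear F i -> F j} :=
  match e in _ = j return {linear F i -> F j} with erefl => idfun end.
Lemma castF_id i (e : i = i) x : castF e x = x.
Proof. by rewrite (eq_irrelevance e erefl). Qed.
Lemma castFK i j (e1 : i = j) (e2 : j = i) x : castF e2 (castF e1 x) = x.
Proof. by case: j / e1 e2 => e2; rewrite castF_id. Qed.
Lemma castF_irr i j (e1 e2 : i = j) x : castF e1 x = castF e2 x.
Proof. by rewrite (eq_irrelevance e1 e2). Qed.
End Cast.
Section Main.
Variables (R : nzRingType) (X : lmodType R -> Prop).
Hypothesis H : forall M : lmodType R, exists (P : lmodType R) (phi : {linear P -> M}),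
      mod_precover (Xprojective X) phi /\
      (forall y : M, exists x : P, phi x = y) /\
      ker_in X phi.

Definition pcP (M : lmodType R) : lmodType R :=
  proj1_sig (constructive_indefinite_description _ (H M)).
Definition pcphi (M : lmodType R) : {linear pcP M -> M} :=
  proj1_sig (constructive_indefinite_description _
     (proj2_sig (constructive_indefinite_description _ (H M)))).
Lemma pc_spec M : mod_precover (Xprojective X) (pcphi M).
Proof.
exact: (proj1 (proj2_sig (constructive_indefinite_description _ (proj2_sig (constructive_indefinite_description _ (H M)))))).
Qed.

Variables (C : complex R) (N : nat).
Definition Cm (k : nat) := cobj C (N%:Z - k%:Z).
Lemma ed k : (N%:Z - k.+1%:Z + 1 = N%:Z - k%:Z)%R.
Proof. lia. Qed.
Definition dl k : {linear Cm k.+1 -> Cm k} :=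
  castF (cobj C) (ed k) \o cdiff C (N%:Z - k.+1%:Z).

Record stage (k : nat) := Stage {
  sA : lmodType R; sB : lmodType R; sd : {linear sA -> sB}; sal : {linear sA -> Cm k} }.

Section HM.
Variables (k : nat) (s : stage k).
Definition hfun (z : (Cm k.+1 * sA s)%type) : (Cm k * sB s)%type :=
  (dl k z.1 - sal s z.2, sd s z.2).
Lemma hfun_is_linear : linear hfun.
Proof.
move=> a [c1 y1] [c2 y2]; rewrite /hfun /= !linearP /=.
congr (_, _).
by rewrite /= scalerBr scalerN addrACA.
Qed.
HB.instance Definition _ := GRing.isLinear.Build R _ _ _ hfun hfun_is_linear.
Definition hmap : {linear (Cm k.+1 * sA s)%type -> (Cm k * sB s)%type} := hfun.
End HM.

Fixpoint st (k : nat) : stage k :=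
  match k return stage k with
  | 0 => @Stage 0 _ _ (\0 : {linear pcP (Cm 0) -> pcP (Cm 0)}) (pcphi (Cm 0))
  | k'.+1 =>
      let s := st k' in
      let M := kerT (hmap s) in
      @Stage k'.+1 (pcP M) (sA s)
        (snd \o kval (h:=hmap s) \o pcphi M)
        (fst \o kval (h:=hmap s) \o pcphi M)
  end.

Definition A k := sA (st k).
Definition al k : {linear A k -> Cm k} := sal (st k).
Definition dAS k : {linear A k.+1 -> A k} := sd (st k.+1).

Lemma A_Xproj k : Xprojective X (A k).
Proof. by case: k => [|k]; apply: (pc_spec _).1. Qed.

Lemma dAS_sq k (y : A k.+2) : dAS k (dAS k.+1 y) = 0.
Proof.
rewrite /dAS /=.
have := kvalP (pcphi (kerT (hmap (st k.+1))) y).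
case: (kval _) => c z /= /(congr1 snd) /= -> //.
Qed.

Lemma al_comm k (y : A k.+1) : dl k (al k.+1 y) = al k (dAS k y).
Proof.
rewrite /dAS /al /=.
have := kvalP (pcphi (kerT (hmap (st k))) y).
case: (kval _) => c z /= /(congr1 fst) /= /eqP; rewrite subr_eq0 => /eqP //.
Qed.
Lemma castF_cdiff (D : complex R) m n (e : m = n) (e' : (m + 1 = n + 1)%R) x :
  cdiff D n (castF (cobj D) e x) = castF (cobj D) e' (cdiff D m x).
Proof. by case: n / e e' => e'; rewrite !castF_id. Qed.

Lemma castF_cmap (D : complex R) (f : cmorph D C) m n (e : m = n) x :
  cmap f n (castF (cobj D) e x) = castF (cobj C) e (cmap f m x).
Proof. by case: n / e. Qed.

Section Lift.
Variables (D : complex R) (fm : cmorph D C) (HD : C_Xproj X D).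
Definition Dm (k : nat) := cobj D (N%:Z - k%:Z).
Definition dl' k : {linear Dm k.+1 -> Dm k} :=
  castF (cobj D) (ed k) \o cdiff D (N%:Z - k.+1%:Z).

Lemma dl'_sq k x : dl' k (dl' k.+1 x) = 0.
Proof.
have e' : (N%:Z - k.+2%:Z + 1 + 1 = N%:Z - k.+1%:Z + 1)%R by lia.
by rewrite /dl' /= (castF_cdiff (D:=D) (ed k.+1) e') cdiff_sq !raddf0.
Qed.

Lemma fm_dl k x : cmap fm (N%:Z - k%:Z) (dl' k x) = dl k (cmap fm (N%:Z - k.+1%:Z) x).
Proof. by rewrite /dl' /dl /= castF_cmap cmap_comm. Qed.

Lemma HDm k : Xprojective X (Dm k). Proof. exact: HD. Qed.
Record gst k := GSt { gg : {linear Dm k -> A k};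
  gP1 : forall x, al k (gg x) = cmap fm (N%:Z - k%:Z) x;
  gP3 : forall x : Dm k.+1, sd (st k) (gg (dl' k x)) = 0 }.

Definition gs0_ex := (pc_spec (Cm 0)).2 (Dm 0) (cmap fm (N%:Z - 0%:Z)) (@HDm 0).
Definition gs0g : {linear Dm 0 -> A 0} :=
  proj1_sig (constructive_indefinite_description _ gs0_ex).
Lemma gs0P1 x : al 0 (gs0g x) = cmap fm (N%:Z - 0%:Z) x.
Proof. rewrite /gs0g; case: constructive_indefinite_description => g /= Hg; by rewrite Hg. Qed.
Definition gs0 : gst 0 := @GSt 0 gs0g gs0P1 (fun x => erefl).

Section Step.
Variables (k : nat) (g : gst k).
Definition uL : {linear Dm k.+1 -> (Cm k.+1 * A k)%type} :=
  pairL (cmap fm (N%:Z - k.+1%:Z)) (gg g \o dl' k).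
Lemma uL_ker x : hmap (st k) (uL x) = 0.
Proof.
rewrite /= /hfun /pairL /= (gP1 g) fm_dl subrr (gP3 g) //.
Qed.
Definition rL := restr_fun uL_ker.
Definition gstep_ex := (pc_spec (kerT (hmap (st k)))).2 (Dm k.+1) rL (@HDm k.+1).
Definition gnext : {linear Dm k.+1 -> A k.+1} :=
  proj1_sig (constructive_indefinite_description _ gstep_ex).
Lemma gnextE x : pcphi _ (gnext x) = rL x.
Proof. rewrite /gnext; case: constructive_indefinite_description => g' /= Hg; by rewrite -Hg. Qed.
Lemma gnextP1 x : al k.+1 (gnext x) = cmap fm (N%:Z - k.+1%:Z) x.
Proof. by rewrite /al /= gnextE restrE. Qed.
Lemma gnextP2 x : dAS k (gnext x) = gg g (dl' k x).
Proof. by rewrite /dAS /= gnextE restrE. Qed.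
Lemma gnextP3 x : sd (st k.+1) (gnext (dl' k.+1 x)) = 0.
Proof. by rewrite -/(dAS k _) gnextP2 dl'_sq raddf0. Qed.
Definition gstep : gst k.+1 := @GSt k.+1 gnext gnextP1 gnextP3.
End Step.

Fixpoint gs k : gst k := match k with 0 => gs0 | k'.+1 => gstep (gs k') end.
Definition gm k := gg (gs k).
Lemma gmP1 k x : al k (gm k x) = cmap fm (N%:Z - k%:Z) x.
Proof. exact: gP1. Qed.
Lemma gmP2 k x : dAS k (gm k.+1 x) = gm k (dl' k x).
Proof. exact: gnextP2. Qed.
End Lift.
Lemma dl'E (D : complex R) k z : dl' D k z = castF (cobj D) (ed k) (cdiff D _ z). Proof. by []. Qed.
Lemma dlE k z : dl k z = castF (cobj C) (ed k) (cdiff C _ z). Proof. by []. Qed.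
Opaque A dAS al st.
Definition dDgen k1 k2 : {linear A k1 -> A k2} :=
  match k1 =P k2.+1 with ReflectT e => dAS k2 \o castF A e | ReflectF _ => \0 end.
Lemma dDgen_T k1 k2 (e : k1 = k2.+1) x : dDgen k1 k2 x = dAS k2 (castF A e x).
Proof. rewrite /dDgen; case: eqP => [e'|/(_ e) //]; by rewrite (eq_irrelevance e' e). Qed.
Lemma dDgen_F k1 k2 x : k1 <> k2.+1 -> dDgen k1 k2 x = 0.
Proof. by rewrite /dDgen; case: eqP. Qed.
Lemma dDgen_sq k1 k2 k3 x : dDgen k2 k3 (dDgen k1 k2 x) = 0.
Proof.
case: (k1 =P k2.+1) => [e1|ne1]; last by rewrite (dDgen_F _ ne1) raddf0.
rewrite (dDgen_T e1); subst k1; rewrite castF_id.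
case: (k2 =P k3.+1) => [e2|ne2]; last by rewrite (dDgen_F _ ne2).
rewrite (dDgen_T e2); subst k2; rewrite castF_id.
exact: dAS_sq.
Qed.

Definition fD (n : int) : nat := absz (N%:Z - n).
Definition Dcx : complex R :=
  @Complex R (fun n => A (fD n)) (fun n => dDgen (fD n) (fD (n + 1)))
    (fun n x => @dDgen_sq _ _ _ x).

Definition agen k n : {linear A k -> cobj C n} :=
  match (N%:Z - k%:Z =P n) with ReflectT e => castF (cobj C) e \o al k | ReflectF _ => \0 end.
Lemma agen_T k n (e : N%:Z - k%:Z = n) x : agen k n x = castF (cobj C) e (al k x).
Proof. rewrite /agen; case: eqP => [e'|/(_ e) //]; by rewrite (eq_irrelevance e' e). Qed.

Lemma comm_gen k2 n (e : N%:Z - k2.+1%:Z = n) (e' : N%:Z - k2%:Z = n + 1) y :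
  castF (cobj C) e' (al k2 (dAS k2 y)) = cdiff C n (castF (cobj C) e (al k2.+1 y)).
Proof.
subst n; rewrite castF_id -al_comm dlE castFK //.
Qed.

Section Final.
Hypothesis HB : forall n : int, (N%:Z < `|n|)%R -> forall x : cobj C n, x = 0.

Lemma phi_comm n (x : A (fD n)) :
  agen (fD (n + 1)) (n + 1) (dDgen (fD n) (fD (n + 1)) x) = cdiff C n (agen (fD n) n x).
Proof.
case: (boolP (n < N%:Z)%R) => hn; last first.
  have hlt : (N%:Z < `|n + 1|)%R by move: hn; rewrite -real_leNgt ?num_real // => hn; lia.
  exact: (eq_trans (HB hlt _) (esym (HB hlt _))).
have e1 : fD n = (fD (n + 1)).+1 by rewrite /fD; lia.
have e : N%:Z - (fD n)%:Z = n by rewrite /fD; lia.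
have e' : N%:Z - (fD (n + 1))%:Z = n + 1 by rewrite /fD; lia.
rewrite (dDgen_T e1) (agen_T e') (agen_T e).
move: (fD n) e1 e x => k1 e1; subst k1 => e x; rewrite castF_id.
exact: comm_gen.
Qed.

Definition phiD : cmorph Dcx C := @CMorph _ Dcx C (fun n => agen (fD n) n) phi_comm.

Lemma agen_F k n x : N%:Z - k%:Z <> n -> agen k n x = 0.
Proof. by rewrite /agen; case: eqP. Qed.

Variables (D : complex R) (fm : cmorph D C) (HD : C_Xproj X D).
Definition ggen k n : {linear cobj D n -> A k} :=
  match (N%:Z - k%:Z =P n) with
  | ReflectT e => gm fm HD k \o castF (cobj D) (esym e) | ReflectF _ => \0 end.
Lemma ggen_T k n (e : N%:Z - k%:Z = n) x : ggen k n x = gm fm HD k (castF (cobj D) (esym e) x).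
Proof. rewrite /ggen; case: eqP => [e'|/(_ e) //]; by rewrite (eq_irrelevance e' e). Qed.
Lemma ggen_F k n x : N%:Z - k%:Z <> n -> ggen k n x = 0.
Proof. by rewrite /ggen; case: eqP. Qed.

Lemma g_comm n (x : cobj D n) :
  ggen (fD (n + 1)) (n + 1) (cdiff D n x) = dDgen (fD n) (fD (n + 1)) (ggen (fD n) n x).
Proof.
case: (boolP (n < N%:Z)%R) => hn; last first.
  have hn' : (N%:Z <= n)%R by move: hn; rewrite -real_leNgt ?num_real.
  rewrite ggen_F; last by rewrite /fD; lia.
  by rewrite dDgen_F //; rewrite /fD; lia.
have e1 : fD n = (fD (n + 1)).+1 by rewrite /fD; lia.
have e : N%:Z - (fD n)%:Z = n by rewrite /fD; lia.
have e' : N%:Z - (fD (n + 1))%:Z = n + 1 by rewrite /fD; lia.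
rewrite (dDgen_T e1) (ggen_T e') (ggen_T e).
move: (fD n) e1 e => k1 e1; subst k1 => e; rewrite castF_id.
move: (fD (n + 1)) e e' => k2 e e'.
subst n; rewrite castF_id gmP2 dl'E; by rewrite (castF_irr (esym e') (ed k2)).
Qed.

Definition gD : cmorph D Dcx := @CMorph _ D Dcx (fun n => ggen (fD n) n) g_comm.

Lemma prec n (x : cobj D n) : cmap fm n x = agen (fD n) n (ggen (fD n) n x).
Proof.
case: (boolP (n <= N%:Z)%R) => hn; last first.
  have hlt : (N%:Z < `|n|)%R by move: hn; rewrite -real_ltNge ?num_real // => hn; lia.
  exact: (eq_trans (HB hlt _) (esym (HB hlt _))).
have e : N%:Z - (fD n)%:Z = n by rewrite /fD; lia.
rewrite (ggen_T e) (agen_T e).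
move: (fD n) e => k e; subst n; rewrite !castF_id gmP1 //.
Qed.
End Final.
End Main.

Theorem lemma2p23 (R : nzRingType) (X : lmodType R -> Prop) :
  (forall M : lmodType R, exists (P : lmodType R) (phi : {linear P -> M}),
      mod_precover (Xprojective X) phi /\
      (forall y : M, exists x : P, phi x = y) /\
      ker_in X phi) ->
  forall C : complex R, bounded C ->
    exists (D : complex R) (phi : cmorph D C), cx_precover (C_Xproj X) phi.
Proof.
move=> H C [N HB].
exists (Dcx H C N); exists (phiD H HB); split.
  by move=> n; exact: (@A_Xproj _ _ H C N _).
move=> D' f HD'; exists (gD H N f HD') => n x; exact: (prec H HB).
Qed.
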